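(* Fix a tetrahedral erasure channel $W$. Then $A(W_n)=O(1/n)$ as $n\to\infty$; that is, there is a constant $C$ (depending on $W$) such that for every $n\ge1$, every $n$th-generation descendant $W'$ of $W$ satisfies $A(W')\le C/n$.
   Context: $\mathrm{TEC}(p,q,r,s,t)$ denotes a tetrahedral erasure channel with parameters $p,q,r,s,t\ge0$ summing to $1$; its moment of inertia is $A=(q-r)^2+(r-s)^2+(s-q)^2$. For $W=\mathrm{TEC}(p,q,r,s,t)$, the serial child is $W^{s}=\mathrm{TEC}(p^2,\ ps+sq+qp,\ pq+qr+rp,\ pr+rs+sp,\ 1-\text{(sum of the other four)})$ and the parallel child is $W^{p}=\mathrm{TEC}(1-\text{(sum of the other four)},\ ts+sq+qt,\ tq+qr+rt,\ tr+rs+st,\ t^2)$. The $0$th-generation descendant of $W$ is $W$; the $n$th-generation descendants are the children of the $(n-1)$th-generation descendants. $W_n$ denotes a (uniformly random) $n$th-generation descendant obtained by choosing a child with probability $1/2$ at each step. *)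

(* Defs.v *)
From Stdlib Require Import Reals List.
Open Scope R_scope.

Record TEC : Type := mkTEC { tp : R; tq : R; tr : R; ts : R; tt : R }.

Definition is_TEC (W : TEC) : Prop :=
  0 <= tp W /\ 0 <= tq W /\ 0 <= tr W /\ 0 <= ts W /\ 0 <= tt W /\
  tp W + tq W + tr W + ts W + tt W = 1.

Definition inertia (W : TEC) : R :=
  (tq W - tr W)^2 + (tr W - ts W)^2 + (ts W - tq W)^2.

Definition serial_child (W : TEC) : TEC :=
  let p := tp W in let q := tq W in let r := tr W in let s := ts W in
  let p' := p^2 in
  let q' := p*s + s*q + q*p in
  let r' := p*q + q*r + r*p in
  let s' := p*r + r*s + s*p in
  mkTEC p' q' r' s' (1 - (p' + q' + r' + s')).

Definition parallel_child (W : TEC) : TEC :=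
  let q := tq W in let r := tr W in let s := ts W in let t := tt W in
  let q' := t*s + s*q + q*t in
  let r' := t*q + q*r + r*t in
  let s' := t*r + r*s + s*t in
  let t' := t^2 in
  mkTEC (1 - (q' + r' + s' + t')) q' r' s' t'.

(* The nth-generation
   descendants of W are exactly descendant W l for lists l of length n. *)
Fixpoint descendant (W : TEC) (l : list bool) : TEC :=
  match l with
  | nil => W
  | b :: l' => descendant (if b then serial_child W else parallel_child W) l'
  end.

(* Main.v *)
Require Import Defs.
From Stdlib Require Import Reals List Lra Psatz.
Open Scope R_scope.

Lemma fac_bound (f q r : R) : 0 <= f -> f <= 1 - q - r -> 0 <= q -> 0 <= r ->
  q <= 1 -> r <= 1 -> f^2 * (q - r)^2 <= (q-r)^2 - ((q-r)^2)^2.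
Proof.
  intros.
  assert (H6 : f^2 <= (1-q-r)^2) by (apply pow_incr; lra).
  assert (H7 : (1-q-r)^2 <= 1 - (q-r)^2) by (pose proof (Rmult_le_pos q (1-q) H1 ltac:(lra)); pose proof (Rmult_le_pos r (1-r) H2 ltac:(lra)); nra).
  assert (H8 : 0 <= (q-r)^2) by apply pow2_ge_0.
  assert (H9 : f^2 * (q-r)^2 <= (1 - (q-r)^2) * (q-r)^2) by (apply Rmult_le_compat_r; lra).
  lra.
Qed.

Lemma sq_sum (a b c : R) : (a^2+b^2+c^2)^2 <= 3 * ((a^2)^2 + (b^2)^2 + (c^2)^2).
Proof.
  generalize (a^2) (b^2) (c^2); intros x y z.
  pose proof (pow2_ge_0 (x-y)); pose proof (pow2_ge_0 (y-z)); pose proof (pow2_ge_0 (z-x)).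
  lra.
Qed.

Lemma gen_step (p q r s t : R) :
  0 <= p -> 0 <= q -> 0 <= r -> 0 <= s -> 0 <= t -> p+q+r+s+t = 1 ->
  let q' := p*s + s*q + q*p in
  let r' := p*q + q*r + r*p in
  let s' := p*r + r*s + s*p in
  let A := (q - r)^2 + (r - s)^2 + (s - q)^2 in
  (q' - r')^2 + (r' - s')^2 + (s' - q')^2 <= A - A^2/3.
Proof.
  intros Hp Hq Hr Hs Ht Hsum q' r' s' A.
  assert (E1 : q' - r' = (p+q)*(s-r)) by (unfold q', r'; ring).
  assert (E2 : r' - s' = (p+r)*(q-s)) by (unfold r', s'; ring).
  assert (E3 : s' - q' = (p+s)*(r-q)) by (unfold s', q'; ring).
  rewrite E1, E2, E3.
  replace (((p+q)*(s-r))^2) with ((p+q)^2*(r-s)^2) by ring.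
  replace (((p+r)*(q-s))^2) with ((p+r)^2*(s-q)^2) by ring.
  replace (((p+s)*(r-q))^2) with ((p+s)^2*(q-r)^2) by ring.
  pose proof (fac_bound (p+q) r s ltac:(lra) ltac:(lra) Hr Hs ltac:(lra) ltac:(lra)).
  pose proof (fac_bound (p+r) s q ltac:(lra) ltac:(lra) Hs Hq ltac:(lra) ltac:(lra)).
  pose proof (fac_bound (p+s) q r ltac:(lra) ltac:(lra) Hq Hr ltac:(lra) ltac:(lra)).
  pose proof (sq_sum (q-r) (r-s) (s-q)).
  unfold A. lra.
Qed.

Lemma serial_tec W : is_TEC W -> is_TEC (serial_child W).
Proof.
  destruct W as [p q r s t]; unfold is_TEC, serial_child; simpl.
  intros (Hp&Hq&Hr&Hs&Ht&Hsum). repeat split; try nra.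
Qed.

Lemma parallel_tec W : is_TEC W -> is_TEC (parallel_child W).
Proof.
  destruct W as [p q r s t]; unfold is_TEC, parallel_child; simpl.
  intros (Hp&Hq&Hr&Hs&Ht&Hsum). repeat split; try nra.
Qed.

Lemma serial_step W : is_TEC W ->
  inertia (serial_child W) <= inertia W - (inertia W)^2/3.
Proof.
  destruct W as [p q r s t]; unfold is_TEC, inertia, serial_child; simpl.
  intros (Hp&Hq&Hr&Hs&Ht&Hsum).
  exact (gen_step p q r s t Hp Hq Hr Hs Ht Hsum).
Qed.

Lemma parallel_step W : is_TEC W ->
  inertia (parallel_child W) <= inertia W - (inertia W)^2/3.
Proof.
  destruct W as [p q r s t]; unfold is_TEC, inertia, parallel_child; simpl.
  intros (Hp&Hq&Hr&Hs&Ht&Hsum).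
  apply (gen_step t q r s p); lra.
Qed.

Lemma descendant_app W l b :
  descendant W (l ++ b :: nil) =
  (if b then serial_child else parallel_child) (descendant W l).
Proof.
  revert W; induction l as [|c l IH]; intros W; simpl.
  - destruct b; reflexivity.
  - apply IH.
Qed.

Lemma inertia_nonneg W : 0 <= inertia W.
Proof. unfold inertia. pose proof (pow2_ge_0 (tq W - tr W)); pose proof (pow2_ge_0 (tr W - ts W)); pose proof (pow2_ge_0 (ts W - tq W)). lra. Qed.

Lemma main_bound W l : is_TEC W ->
  is_TEC (descendant W l) /\ inertia (descendant W l) * INR (length l) <= 3.
Proof.
  intros HW. induction l as [|b l IH] using rev_ind.
  - simpl. split; [exact HW|lra].
  - destruct IH as [HT HB].
    rewrite descendant_app, length_app. simpl length.
    rewrite plus_INR. simpl INR.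
    set (x := inertia (descendant W l)) in *.
    assert (Hx := inertia_nonneg (descendant W l)). fold x in Hx.
    pose proof (pos_INR (length l)) as HN.
    destruct b.
    + split; [now apply serial_tec|].
      pose proof (serial_step _ HT) as S. fold x in S.
      pose proof (inertia_nonneg (serial_child (descendant W l))).
      set (y := inertia (serial_child (descendant W l))) in *.
      set (N := INR (length l)) in *.
      assert (y * (N+1) <= (x - x^2/3)*(N+1)) by (apply Rmult_le_compat_r; lra).
      assert ((x - x^2/3)*(N+1) <= 3); [|lra].
      destruct (Rle_lt_dec x 3) as [Hx3|Hx3].
      * pose proof (Rmult_le_pos (3 - x*N) (3-x) ltac:(lra) ltac:(lra)).
        pose proof (pow2_ge_0 x). nra.
      * assert (0 <= x*(x-3)*(N+1)) by (apply Rmult_le_pos; [apply Rmult_le_pos|]; lra).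
        nra.
    + split; [now apply parallel_tec|].
      pose proof (parallel_step _ HT) as S. fold x in S.
      pose proof (inertia_nonneg (parallel_child (descendant W l))).
      set (y := inertia (parallel_child (descendant W l))) in *.
      set (N := INR (length l)) in *.
      assert (y * (N+1) <= (x - x^2/3)*(N+1)) by (apply Rmult_le_compat_r; lra).
      assert ((x - x^2/3)*(N+1) <= 3); [|lra].
      destruct (Rle_lt_dec x 3) as [Hx3|Hx3].
      * pose proof (Rmult_le_pos (3 - x*N) (3-x) ltac:(lra) ltac:(lra)).
        pose proof (pow2_ge_0 x). nra.
      * assert (0 <= x*(x-3)*(N+1)) by (apply Rmult_le_pos; [apply Rmult_le_pos|]; lra).
        nra.
Qed.

Theorem mainTheorem3 (W : TEC) (HW : is_TEC W) :
  exists C : R, forall (n : nat) (l : list bool),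
    (1 <= n)%nat -> length l = n ->
    inertia (descendant W l) <= C / INR n.
Proof.
  exists 3. intros n l Hn Hl.
  destruct (main_bound W l HW) as [_ HB]. rewrite Hl in HB.
  assert (HN : 1 <= INR n) by (apply (le_INR 1); exact Hn).
  apply Rmult_le_reg_r with (INR n); [lra|].
  unfold Rdiv. rewrite Rmult_assoc, Rinv_l by lra. lra.
Qed.
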